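(* Let $p$ be a prime and let $c,e,j$ be residues mod $p$ with $c\notin\{0,1\}$, $j\notin\{0,1\}$ and $e\notin\{0,\,j,\,c,\,c+j-1,\,jc\}$. Let $m\ge 2$ be an integer dividing $p-1$. Define \[ F(x)=\frac{1-jx}{1-j},\qquad G(x)=\frac{e-xjc}{e-jc},\qquad H(x)=\frac{xj(1-c)+e-j}{e-jc}. \] Suppose there is $x\not\equiv 0$ which is an $m$th power mod $p$ such that $F(x)$ is a non-zero $m$th power mod $p$, and neither $G(x)$ nor $H(x)$ is a non-zero $m$th power mod $p$. Then the three cyclic transversals generated by $0\circ 0=0$, $0\circ 1=j$ and $0\circ c=e$, i.e. the partial latin square \[ \{(i,i,i),\ (i,1+i,j+i),\ (i,c+i,e+i)\mid 0\le i<p\}, \] can be completed to a diagonally cyclic latin square of order $p$.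
   Context: Triples $(r,s,t)$ denote symbol $t$ in row $r$, column $s$; all indices are modulo $p$. A latin square with operation $\circ$ of odd order $n$ is diagonally cyclic if $i\circ j=k$ implies $(i+1)\circ(j+1)=k+1$ for all cells. A partial latin square is completed by a latin square if it is contained in it (as a set of triples). *)

(* Defs.v *)
From HB Require Import structures.
From mathcomp Require Import all_boot all_order all_algebra.
Set Implicit Arguments. Unset Strict Implicit. Unset Printing Implicit Defensive.
Import GRing.Theory.
Local Open Scope ring_scope.

Definition is_mth_power (R : ringType) (m : nat) (x : R) : Prop :=
  exists y : R, y ^+ m = x.

Definition is_nz_mth_power (R : ringType) (m : nat) (x : R) : Prop :=
  x != 0 /\ is_mth_power m x.

(* A latin square with rows, columns and symbols indexed by the finite type T:
   L r s is the symbol in row r, column s; every row and every column contains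
   each symbol exactly once (injectivity suffices on a finite type). *)
Definition latin_square (T : finType) (L : T -> T -> T) : Prop :=
  (forall r, injective (L r)) /\ (forall s, injective (fun r => L r s)).

Definition diag_cyclic (R : finRingType) (L : R -> R -> R) : Prop :=
  forall r s, L (r + 1) (s + 1) = L r s + 1.

Definition completes (T : finType) (P : T -> T -> T -> Prop) (L : T -> T -> T) : Prop :=
  forall r s t, P r s t -> L r s = t.

(* Main.v *)
Require Import Defs.
From HB Require Import structures.
From mathcomp Require Import all_boot all_order all_algebra.
Import GRing.Theory.
Local Open Scope ring_scope.
Section S.
Variable F : finFieldType.
Variable m : nat.
Definition nzp (z : F) : bool := (z != 0) && [exists y : F, y ^+ m == z].
Lemma nzpP z : reflect (is_nz_mth_power m z) (nzp z).
Proof.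
apply: (iffP andP) => [[nz /existsP [y /eqP hy]] | [nz [y hy]]].
  by split => //; exists y.
by split => //; apply/existsP; exists y; rewrite hy.
Qed.
Lemma nzpM a b : nzp a -> nzp b -> nzp (a * b).
Proof.
move=> /andP [na /existsP [y /eqP hy]] /andP [nb /existsP [z /eqP hz]].
apply/andP; split; first by rewrite mulf_neq0.
by apply/existsP; exists (y * z); rewrite exprMn hy hz.
Qed.
Lemma nzp1 : nzp 1.
Proof. by apply/andP; split; [exact: oner_neq0 | apply/existsP; exists 1; rewrite expr1n]. Qed.
Lemma inj_lem (k al be : F) : al != 0 -> be != 0 -> nzp (al / be) ->
  injective (fun z => if nzp (z / k) then al * z else be * z).
Proof.
move=> na nb hab z1 z2 /=.
have key : forall w1 w2, nzp (w1 / k) -> ~~ nzp (w2 / k) -> al * w1 = be * w2 -> False.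
  move=> w1 w2 h1 h2 e; move: h2; suff -> : w2 / k = al / be * (w1 / k) by rewrite nzpM.
  have -> : w2 = al / be * w1 by rewrite -mulrA (mulrC _ w1) mulrA e mulrAC divff // mul1r.
  by rewrite mulrA.
case h1 : (nzp (z1 / k)); case h2 : (nzp (z2 / k)).
- exact: mulfI.
- move=> e; exfalso; apply: (key z1 z2) => //; by rewrite h2.
- move=> e; exfalso; apply: (key z2 z1) => //; by rewrite h1.
- exact: mulfI.
Qed.
Lemma id1 (e j c x : F) : (e - j*c) - c*(j*(x-1)) = e - x*j*c.
Proof.
rewrite mulrBr mulr1 mulrBr opprB (mulrC c j) addrA subrK.
by rewrite (mulrC c) (mulrC j x).
Qed.
Lemma id2 (e j c x : F) : j*(x-1) + ((e - j*c) - c*(j*(x-1))) = x*j*(1-c) + e - j.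
Proof.
rewrite id1 mulrBr mulr1 mulrBr mulr1 (mulrC j x).
rewrite -!addrA; congr (_ + _). by rewrite (addrC (-j)) -addrA [RHS]addrCA.
Qed.
Lemma divdiv (A B D : F) : D != 0 -> (A / D) / (B / D) = A / B.
Proof. by move=> nD; rewrite invfM invrK mulrA mulrAC divfK. Qed.
End S.
Arguments nzp {F} m z.
Arguments nzpP {F m z}.
Arguments nzpM {F m a b}.
Arguments nzp1 {F m}.
Arguments inj_lem {F m k al be}.

Theorem lemma4 (p : nat) (hp : prime p) (c e j : 'F_p) (m : nat)
  (hc0 : c != 0) (hc1 : c != 1) (hj0 : j != 0) (hj1 : j != 1)
  (he0 : e != 0) (hej : e != j) (hec : e != c) (hecj : e != c + j - 1)
  (hejc : e != j * c)
  (hm2 : (2 <= m)%N) (hmdvd : (m %| p.-1)%N)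
  (hx : exists x : 'F_p,
      [/\ x != 0, is_mth_power m x,
          is_nz_mth_power m ((1 - j * x) / (1 - j)),
          ~ is_nz_mth_power m ((e - x * j * c) / (e - j * c)) &
          ~ is_nz_mth_power m ((x * j * (1 - c) + e - j) / (e - j * c))]) :
  exists L : 'F_p -> 'F_p -> 'F_p,
    [/\ latin_square L, diag_cyclic L &
        completes (fun r s t => exists i : 'F_p,
                     [\/ (r, s, t) = (i, i, i),
                         (r, s, t) = (i, 1 + i, j + i) |
                         (r, s, t) = (i, c + i, e + i)]) L].
Proof.
case: hx => x [nx0 [y hy] hF hG hH].
have nejc : e - j * c != 0 by rewrite subr_eq0.
have nx1 : x != 1.
  apply/negP => /eqP ex; apply: hG; rewrite ex mul1r divff //.
  by apply/(@nzpP _ m (1 : 'F_p)); exact: nzp1.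
have nD : j * (x - 1) != 0 by rewrite mulf_neq0 // subr_eq0.
set D := j * (x - 1) in nD.
set k := (e - j * c) / D.
have nk : k != 0 by rewrite mulf_neq0 // invr_neq0.
set u := k - c.
set a := j * x.
have eu : u = ((e - j * c) - c * D) / D by rewrite mulrBl mulfK.
have hu : u / k = (e - x * j * c) / (e - j * c) by rewrite eu id1 divdiv.
have h1u : (1 + u) / k = (x * j * (1 - c) + e - j) / (e - j * c).
  by rewrite eu -{1}(divff nD) -mulrDl id2 divdiv.
have eck : c + u = k by rewrite /u addrC subrK.
have hac : a * k - j * u = e.
  have eaj : a - j = D by rewrite /a /D mulrBr mulr1.
  rewrite /u mulrBr opprB addrA addrAC -mulrBl eaj.
  by rewrite /k mulrC divfK // subrK.
set h := fun z : 'F_p => if nzp m (z / k) then a * z else j * z.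
set f := fun y => h (y + u) - h u.
have hGf : nzp m (u / k) = false by rewrite hu; apply/negP => /nzpP.
have hHf : nzp m ((1 + u) / k) = false by rewrite h1u; apply/negP => /nzpP.
have nzx : nzp m x by apply/nzpP; split => //; exists y.
have nzF : nzp m ((a - 1) / (j - 1)).
  have -> : (a - 1) / (j - 1) = (1 - j * x) / (1 - j).
    by rewrite -(opprB 1 a) -(opprB 1 j) invrN mulrNN.
  exact/nzpP.
have na : a != 0 by rewrite mulf_neq0.
have na1 : a - 1 != 0.
  by apply/negP => /eqP e0; move: nzF; rewrite e0 mul0r /nzp eqxx.
have nj1 : j - 1 != 0 by rewrite subr_eq0.
have hinj : injective h.
  apply: inj_lem => //; by rewrite /a (mulrC j) mulfK.
have eh' : forall z, h z - z = if nzp m (z / k) then (a - 1) * z else (j - 1) * z.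
  by move=> z; rewrite /h; case: ifP => _; rewrite mulrBl mul1r.
have hinj' : injective (fun z => h z - z).
  move=> z1 z2; rewrite !eh'; exact: inj_lem.
exists (fun r s => r + f (s - r)); split.
- split.
  + move=> r s1 s2 /= /addrI /addIr /hinj /addIr /addIr //.
  + move=> s r1 r2 /= E.
    have E2 : r1 + h (s - r1 + u) = r2 + h (s - r2 + u).
      by move: E; rewrite !addrA => /addIr.
    have ew : forall r, h (s - r + u) - (s - r + u) = (r + h (s - r + u)) - (s + u).
      move=> r; have -> : -(s - r + u) = r - (s + u) by rewrite (addrAC s) opprB.
      by rewrite addrA (addrC (h _) r).
    have E3 : h (s - r1 + u) - (s - r1 + u) = h (s - r2 + u) - (s - r2 + u).
      by rewrite !ew E2.
    by move/hinj'/addIr/addrI/oppr_inj: E3.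
- move=> r s /=.
  have -> : s + 1 - (r + 1) = s - r by rewrite opprD addrACA subrr addr0.
  by rewrite addrAC.
- move=> r s t [i [E|E|E]]; case: E => -> -> ->.
  + by rewrite subrr /f add0r subrr addr0.
  + rewrite addrK /f /h hGf hHf mulrDr mulr1 addrK; exact: addrC.
  + rewrite addrK /f /h hGf eck divff // nzp1 hac; exact: addrC.
Qed.
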